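(* Let $\mathbf{A}$ be a filtered quantization of $A$ and $S=S(\mathbf{A})$ the set of nondegenerate short star-products on $A$ corresponding to $\mathbf{A}$. Then there is a map $\pi:S\to\mathrm{Aut}(\mathbf{A})$ to the group of filtration-preserving $s$-invariant automorphisms of $\mathbf{A}$ (sending a star-product to its twisting automorphism $g$) whose fiber $\pi^{-1}(g)$ is a subset of the dual space $(HH_0(\mathbf{A},\mathbf{A}g)^s)^*$ of the $s$-invariants in $HH_0(\mathbf{A},\mathbf{A}g)$.
   Context: $A=\bigoplus_{d\ge0}A_d$ commutative graded, $A_0=\mathbb{C}$, $\dim A_d<\infty$, Poisson bracket of degree $-2$; $s=(-1)^d$. Filtered quantization: filtered algebra with $\mathrm{gr}\,\mathbf{A}\cong A$, filtration-preserving involution $s$ with associated graded $(-1)^d$. A star-product $a*b=\sum_kC_k(a,b)$ ($C_k$ of degree $-2k$, $C_0$ = product, $C_1(a,b)-C_1(b,a)=\{a,b\}$) corresponds to $\mathbf{A}$ if $(A,* )$ is identified with $\mathbf{A}$ via a quantization map ($s$-equivariant, filtration-preserving linear iso with $\mathrm{gr}=\mathrm{id}$). Short: $C_k(a,b)=0$ for $k>\min(\deg a,\deg b)$; nondegenerate: $\mathrm{CT}(a*b)$ nondegenerate on each $A_i$. For such a star-product the functional $T=\mathrm{CT}$ on $\mathbf{A}$ satisfies $T(\mathbf{a}\mathbf{b})=T(\mathbf{b}g(\mathbf{a}))$ for a unique filtration-preserving automorphism $g$ commuting with $s$ (the twisting automorphism). $\mathbf{A}g$ is $\mathbf{A}$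 with right action twisted by $g$; $HH_0(\mathbf{A},\mathbf{A}g)=\mathbf{A}/\mathrm{span}\{\mathbf{a}\mathbf{b}-\mathbf{b}g(\mathbf{a})\}$. *)

(* Defs.v *)
(* Base field: C := R[i] for R : realType (a model of the
   complex numbers; every realType is isomorphic to the reals). *)
From mathcomp Require Import all_boot all_order all_algebra.
From mathcomp Require Import reals.
From mathcomp Require Export complex.

Set Implicit Arguments.
Unset Strict Implicit.
Unset Printing Implicit Defensive.

Import Order.TTheory GRing.Theory Num.Theory.
Local Open Scope ring_scope.

Section Defs.
Variable R : realType.
Local Notation C := (R[i]).

(*   pr d  : projection of A onto A_d                                   *)
(*   ct    : constant term; A_0 = C.1 is encoded by  pr 0 a = ct a *: 1 *)
Variable A : comAlgType C.
Variable pr : nat -> A -> A.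
Variable ct : A -> C.
Variable pb : A -> A -> A.

Definition linA (f : A -> A) := forall (c : C) x y, f (c *: x + y) = c *: f x + f y.

Definition hom (d : nat) (a : A) := pr d a = a.

Definition graded_poisson_algebra : Prop :=
  [/\
      [/\ (forall d, linA (pr d)),
          (forall d e a, pr d (pr e a) = if d == e then pr e a else 0)
        & (forall a, exists N, a = \sum_(d < N) pr d a)],
      (hom 0 1 /\ (forall i j a b, hom i a -> hom j b -> hom (i + j) (a * b))),
      ((1 : A) != 0 /\ (forall a, pr 0 a = ct a *: 1)),
      (forall d, exists s : seq A, forall a, hom d a ->
         exists c : 'I_(size s) -> C, a = \sum_(k < size s) c k *: s`_k)
    &
      [/\ (forall a, linA (pb a)),
          (forall a b, pb a b = - pb b a),
          (forall a b c, pb a (pb b c) + pb b (pb c a) + pb c (pb a b) = 0),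
          (forall a b c, pb a (b * c) = pb a b * c + b * pb a c)
        & (forall i j a b, hom i a -> hom j b ->
             if (2 <= i + j)%N then hom (i + j - 2) (pb a b) else pb a b = 0)]].

(*   sym i : the symbol map F_i B -> F_i B / F_(i-1) B = A_i  (gr B = A) *)
Variable B : algType C.
Variable F : nat -> B -> Prop.
Variable sym : nat -> B -> A.
Variable s : B -> B.

Definition linB (f : B -> B) := forall (c : C) x y, f (c *: x + y) = c *: f x + f y.

(* F_(i-1), with F_(-1) = 0 *)
Definition Fprev (i : nat) (x : B) : Prop :=
  match i with 0 => x = 0 | k.+1 => F k x end.

Definition ring_endo (f : B -> B) :=
  [/\ linB f, f 1 = 1 & forall x y, f (x * y) = f x * f y].

Definition filtered_quantization : Prop :=
  [/\
      [/\ (forall i, F i 0 /\ forall (c : C) x y, F i x -> F i y -> F i (c *: x + y)),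
          (forall i x, F i x -> F i.+1 x),
          (forall x, exists i, F i x)
        & (F 0 1 /\ (forall i j x y, F i x -> F j y -> F (i + j) (x * y)))],
      (* gr B = A as graded Poisson algebras, via the symbol maps *)
      [/\ (forall i x, F i x -> hom i (sym i x)),
          (forall i (c : C) x y, F i x -> F i y ->
              sym i (c *: x + y) = c *: sym i x + sym i y),
          (forall i x, F i x -> (sym i x = 0 <-> Fprev i x)),
          (forall i a, hom i a -> exists x, F i x /\ sym i x = a)
        & ((forall i j x y, F i x -> F j y -> sym (i + j) (x * y) = sym i x * sym j y) /\
          (forall i j x y, F i x -> F j y ->
             if (2 <= i + j)%N then
               F (i + j - 2) (x * y - y * x) /\
               sym (i + j - 2) (x * y - y * x) = pb (sym i x) (sym j y)
             else x * y - y * x = 0))]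
    &
      [/\ ring_endo s,
          (forall x, s (s x) = x),
          (forall i x, F i x -> F i (s x))
        & (forall i x, F i x -> sym i (s x) = (-1) ^+ i *: sym i x)]].

Definition quantization_map (Phi : A -> B) (Psi : B -> A) : Prop :=
  [/\ (forall (c : C) a b, Phi (c *: a + b) = c *: Phi a + Phi b),
      cancel Phi Psi, cancel Psi Phi,
      (forall i a, hom i a -> F i (Phi a) /\ sym i (Phi a) = a)
    & (forall i a, hom i a -> Phi ((-1) ^+ i *: a) = s (Phi a))].

(* components C_k of a star-product a * b = sum_k C_k(a,b) *)
Definition star_components (Ck : nat -> A -> A -> A) : Prop :=
  [/\ (forall k a, linA (Ck k a)),
      (forall k b, linA (fun a => Ck k a b)),
      (forall k i j a b, hom i a -> hom j b ->
         if (2 * k <= i + j)%N then hom (i + j - 2 * k) (Ck k a b)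
         else Ck k a b = 0),
      (forall a b, Ck 0%N a b = a * b)
    & (forall a b, Ck 1%N a b - Ck 1%N b a = pb a b)].

(* the star-product with components Ck is the one transported from B by Phi *)
Definition corresponds (Ck : nat -> A -> A -> A) (Phi : A -> B) : Prop :=
  forall i j a b, hom i a -> hom j b ->
    Phi (\sum_(k < (i + j).+1) Ck k a b) = Phi a * Phi b.

Definition short (Ck : nat -> A -> A -> A) : Prop :=
  forall k i j a b, hom i a -> hom j b -> (minn i j < k)%N -> Ck k a b = 0.

Definition starp (Phi : A -> B) (Psi : B -> A) (a b : A) : A := Psi (Phi a * Phi b).

Definition nondegenerate (Phi : A -> B) (Psi : B -> A) : Prop :=
  forall i a, hom i a -> a != 0 -> exists b, hom i b /\ ct (starp Phi Psi a b) != 0.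

(* membership in S(B): a nondegenerate short star-product corresponding to B,
   recorded together with its quantization map (Phi, Psi). *)
Definition in_S (Phi : A -> B) (Psi : B -> A) : Prop :=
  [/\ quantization_map Phi Psi,
      (exists Ck, [/\ star_components Ck, corresponds Ck Phi & short Ck])
    & nondegenerate Phi Psi].

(* the functional T = CT on B (transported through the quantization map) *)
Definition trT (Psi : B -> A) (x : B) : C := ct (Psi x).

Definition in_Aut (g : B -> B) : Prop :=
  [/\ ring_endo g,
      (exists ginv, cancel g ginv /\ cancel ginv g),
      (forall i x, F i x -> F i (g x))
    & (forall x, g (s x) = s (g x))].

Definition twisting (Psi : B -> A) (g : B -> B) : Prop :=
  in_Aut g /\ forall x y, trT Psi (x * y) = trT Psi (y * g x).

(* span{ x y - y g(x) } ; HH_0(B, Bg) = B / twcomm g *)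
Definition twcomm (g : B -> B) (z : B) : Prop :=
  exists l : seq (C * B * B),
    z = \sum_(t <- l) t.1.1 *: (t.1.2 * t.2 - t.2 * g t.1.2).

(* preimage in B of the s-invariants HH_0(B, Bg)^s *)
Definition HH0s_pre (g : B -> B) (x : B) : Prop := twcomm g (s x - x).

(* f : B -> C represents an element of (HH_0(B,Bg)^s)^* : it is linear and
   vanishes on twcomm g; two representatives define the same element iff
   they agree on HH0s_pre g. *)
Definition HH0s_dual_rep (g : B -> B) (f : B -> C) : Prop :=
  (forall (c : C) x y, f (c *: x + y) = c * f x + f y) /\
  (forall x, twcomm g x -> f x = 0).

End Defs.

(* Main.v *)
Require Import Defs.
From mathcomp Require Import all_boot all_order all_algebra.
From mathcomp Require Import reals complex.
From mathcomp Require Import zify.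
From Stdlib Require Import IndefiniteDescription.
Set Implicit Arguments. Unset Strict Implicit. Unset Printing Implicit Defensive.
Import Order.TTheory GRing.Theory Num.Theory.
Local Open Scope ring_scope.

Section Lin.
Variable K : fieldType.
Variable V : lmodType K.
Variable P : V -> Prop.
Variable beta : V -> V -> K.
Hypothesis bl : forall c x y z, beta (c *: x + y) z = c * beta x z + beta y z.
Hypothesis br : forall c x y z, beta z (c *: x + y) = c * beta z x + beta z y.
Variable n : nat.
Variable e : 'I_n -> V.
Hypothesis span : forall a, P a -> exists u : 'rV[K]_n, a = \sum_k u 0 k *: e k.
Hypothesis eP : forall k, P (e k).
Hypothesis Pev : forall u : 'rV[K]_n, P (\sum_k u 0 k *: e k).
Hypothesis nd : forall a, P a -> (forall b, P b -> beta a b = 0) -> a = 0.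

Let ev (u : 'rV[K]_n) := \sum_k u 0 k *: e k.
Let G := \matrix_(k, l) beta (e k) (e l).

Lemma bl0 z : beta 0 z = 0.
Proof. have := bl 1 0 0 z; rewrite scaler0 addr0 mul1r => H.
by apply: (addrI (beta 0 z)); rewrite addr0 -H. Qed.
Lemma br0 z : beta z 0 = 0.
Proof. have := br 1 0 0 z; rewrite scaler0 addr0 mul1r => H.
by apply: (addrI (beta z 0)); rewrite addr0 -H. Qed.

Lemma bl_sum (I : finType) (f : I -> V) (c : I -> K) z :
  beta (\sum_i c i *: f i) z = \sum_i c i * beta (f i) z.
Proof.
rewrite (big_morph (fun x => beta x z) (id1 := 0) (op1 := +%R)).
- by apply: eq_bigr => i _; rewrite -[c i *: f i]addr0 bl bl0 addr0.
- by move=> x y; rewrite -[x]scale1r bl mul1r scale1r.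
- exact: bl0.
Qed.
Lemma br_sum (I : finType) (f : I -> V) (c : I -> K) z :
  beta z (\sum_i c i *: f i) = \sum_i c i * beta z (f i).
Proof.
rewrite (big_morph (fun x => beta z x) (id1 := 0) (op1 := +%R)).
- by apply: eq_bigr => i _; rewrite -[c i *: f i]addr0 br br0 addr0.
- by move=> x y; rewrite -[x]scale1r br mul1r scale1r.
- exact: br0.
Qed.

Lemma mulG u l : (u *m G) 0 l = beta (ev u) (e l).
Proof. by rewrite mxE bl_sum; apply: eq_bigr => k _; rewrite mxE. Qed.
Lemma mulGT u l : (u *m G^T) 0 l = beta (e l) (ev u).
Proof. by rewrite mxE br_sum; apply: eq_bigr => k _; rewrite !mxE. Qed.

Lemma rv0 (u : 'rV[K]_n) : (forall l, u 0 l = 0) -> u = 0.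
Proof. by move=> H; apply/matrixP => i l; rewrite ord1 H mxE. Qed.

Lemma kerG u : u *m G = 0 -> ev u = 0.
Proof.
move=> H; apply: nd; first exact: Pev.
move=> b /span [w ->]; rewrite br_sum big1 // => l _.
by rewrite -mulG H mxE mulr0.
Qed.

Lemma L1 p (Y : 'M[K]_(p, n)) : Y *m G = 0 -> Y *m G^T = 0.
Proof.
move=> H; apply/row_matrixP => i; rewrite row_mul row0.
apply: rv0 => l; rewrite mulGT.
have -> : ev (row i Y) = 0 by apply: kerG; rewrite -row_mul H row0.
exact: br0.
Qed.

Lemma L2 p (Y : 'M[K]_(p, n)) : Y *m G^T = 0 -> Y *m G = 0.
Proof.
move=> H.
have s1 : (kermx G <= kermx G^T)%MS by apply/sub_kermxP; apply: L1; exact: mulmx_ker.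
have : \rank (kermx G) = \rank (kermx G^T) by rewrite !mxrank_ker mxrank_tr.
move/eqP; rewrite (mxrank_leqif_eq s1) => /andP [_ s2].
by apply/sub_kermxP; apply: submx_trans s2; apply/sub_kermxP.
Qed.

Lemma Rdeg v : P v -> (forall b, P b -> beta b v = 0) -> v = 0.
Proof.
move=> Pv H; have [d Hd] := span Pv; rewrite Hd; apply: kerG; apply: L2; apply: rv0 => l.
by rewrite mulGT; have := H _ (eP l); rewrite Hd => ->; rewrite ?mxE.
Qed.

Lemma E1deg a : P a -> exists v, P v /\ forall b, P b -> beta a b = beta b v.
Proof.
move=> Pa; have [c ->] := span Pa.
have HG : G *m cokermx G^T = 0.
  apply: trmx_inj; rewrite trmx0 trmx_mul; apply: L1.
  by rewrite -[G]trmxK -trmx_mul trmxK mulmx_coker trmx0.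
have : (c *m G <= G^T)%MS by rewrite submxE -mulmxA HG mulmx0.
case/submxP => d Hd; exists (ev d); split; first exact: Pev.
move=> b /span [w ->]; rewrite br_sum bl_sum; apply: eq_bigr => l _.
by rewrite -mulG -mulGT Hd.
Qed.
End Lin.

Section Grad.
Variable K : fieldType.
Variable A : lmodType K.
Variable pr : nat -> A -> A.
Hypothesis prL : forall d c x y, pr d (c *: x + y) = c *: pr d x + pr d y.
Hypothesis prpr : forall d e a, pr d (pr e a) = if d == e then pr e a else 0.
Hypothesis decomp : forall a, exists N, a = \sum_(d < N) pr d a.

Lemma pr0 d : pr d 0 = 0.
Proof. have := prL d 1 0 0; rewrite scaler0 addr0 scale1r => H.
by apply: (addrI (pr d 0)); rewrite addr0 -H. Qed.
Lemma prD d x y : pr d (x + y) = pr d x + pr d y.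
Proof. by rewrite -[x]scale1r prL !scale1r. Qed.
Lemma prZ d c x : pr d (c *: x) = c *: pr d x.
Proof. by rewrite -[c *: x]addr0 prL pr0 addr0. Qed.
Lemma prN d x : pr d (- x) = - pr d x.
Proof. by rewrite -scaleN1r prZ scaleN1r. Qed.
Lemma prB d x y : pr d (x - y) = pr d x - pr d y.
Proof. by rewrite prD prN. Qed.
Lemma pr_sum d (I : finType) (f : I -> A) : pr d (\sum_i f i) = \sum_i pr d (f i).
Proof. exact: (big_morph _ (prD d) (pr0 d)). Qed.
Lemma pr_hom d a : pr d (pr d a) = pr d a.
Proof. by rewrite prpr eqxx. Qed.

Lemma sum_delta (M : zmodType) N d (x : M) :
  \sum_(e < N) (if (e : nat) == d then x else 0) = if (d < N)%N then x else 0.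
Proof.
elim: N => [|N IH]; first by rewrite big_ord0.
rewrite big_ord_recr /= IH ltnS.
case: (ltngtP d N) => [lt|gt|E].
- by rewrite addr0.
- by rewrite addr0.
- by rewrite add0r.
Qed.

Lemma pr_of_sum d N a : pr d (\sum_(e < N) pr e a) = if (d < N)%N then pr d a else 0.
Proof.
rewrite pr_sum -sum_delta; apply: eq_bigr => e _.
by rewrite prpr eq_sym; case: eqP => // ->.
Qed.

Lemma ext x : (forall d, pr d x = 0) -> x = 0.
Proof. by move=> H; have [N ->] := decomp x; apply: big1 => d _. Qed.

Lemma ext2 x y : (forall d, pr d x = pr d y) -> x = y.
Proof. by move=> H; apply/eqP; rewrite -subr_eq0; apply/eqP/ext => d; rewrite prB H subrr. Qed.

Definition lowp N a := forall d, (N <= d)%N -> pr d a = 0.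

Lemma sum_pr_eq N a : lowp N a -> a = \sum_(e < N) pr e a.
Proof.
move=> H; apply: ext2 => d; rewrite pr_of_sum.
by case: ltnP => // /H ->.
Qed.

Lemma exists_low a : exists N, lowp N a.
Proof.
have [N HN] := decomp a; exists N => d Hd.
by rewrite HN pr_of_sum ltnNge Hd.
Qed.

Lemma lowp_mono N M a : (N <= M)%N -> lowp N a -> lowp M a.
Proof. by move=> NM H d Hd; apply: H; apply: leq_trans Hd. Qed.

Lemma hom_low d a : pr d a = a -> lowp d.+1 a.
Proof. by move=> <- e He; rewrite prpr; case: eqP => // E; move: He; rewrite E ltnn. Qed.

Variable beta : A -> A -> K.
Hypothesis bl : forall c x y z, beta (c *: x + y) z = c * beta x z + beta y z.
Hypothesis br : forall c x y z, beta z (c *: x + y) = c * beta z x + beta z y.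
Hypothesis bd : forall i j a b, pr i a = a -> pr j b = b -> i != j -> beta a b = 0.
Hypothesis nd : forall i a, pr i a = a -> (forall b, pr i b = b -> beta a b = 0) -> a = 0.
Hypothesis fdim : forall d, exists s : seq A, forall a, pr d a = a ->
   exists c : 'I_(size s) -> K, a = \sum_(k < size s) c k *: s`_k.

Lemma gbl0 z : beta 0 z = 0.
Proof. have := bl 1 0 0 z; rewrite scaler0 addr0 mul1r => H.
by apply: (addrI (beta 0 z)); rewrite addr0 -H. Qed.
Lemma gbr0 z : beta z 0 = 0.
Proof. have := br 1 0 0 z; rewrite scaler0 addr0 mul1r => H.
by apply: (addrI (beta z 0)); rewrite addr0 -H. Qed.
Lemma blD x y z : beta (x + y) z = beta x z + beta y z.
Proof. by rewrite -[x]scale1r bl mul1r !scale1r. Qed.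
Lemma brD x y z : beta z (x + y) = beta z x + beta z y.
Proof. by rewrite -[x]scale1r br mul1r !scale1r. Qed.
Lemma blsum (I : finType) (f : I -> A) z : beta (\sum_i f i) z = \sum_i beta (f i) z.
Proof. exact: (big_morph (fun x => beta x z) (fun x y => blD x y z) (gbl0 z)). Qed.
Lemma brsum (I : finType) (f : I -> A) z : beta z (\sum_i f i) = \sum_i beta z (f i).
Proof. exact: (big_morph (fun x => beta z x) (fun x y => brD x y z) (gbr0 z)). Qed.

Lemma Lpr d a b : pr d b = b -> beta a b = beta (pr d a) b.
Proof.
move=> Hb; have [N HN] := exists_low a.
have HM := lowp_mono (leq_maxl N d.+1) HN.
rewrite {1}(sum_pr_eq HM) blsum.
rewrite (bigD1 (Ordinal (leq_maxr N d.+1))) //= big1 ?addr0 // => e ne.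
apply: (bd (pr_hom _ _) Hb).
by apply: contra ne => /eqP E; apply/eqP; apply: val_inj.
Qed.

Lemma Rpr d a b : pr d a = a -> beta a b = beta a (pr d b).
Proof.
move=> Ha; have [N HN] := exists_low b.
have HM := lowp_mono (leq_maxl N d.+1) HN.
rewrite {1}(sum_pr_eq HM) brsum.
rewrite (bigD1 (Ordinal (leq_maxr N d.+1))) //= big1 ?addr0 // => e ne.
apply: (bd Ha (pr_hom _ _)).
by apply: contra ne => /eqP E; apply/eqP; apply: val_inj.
Qed.

Lemma GL a : (forall b, beta a b = 0) -> a = 0.
Proof.
move=> H; apply: ext => d; apply: (nd (pr_hom d a)) => b Hb.
by rewrite -(Lpr a Hb).
Qed.

Section Deg.
Variable d : nat.
Lemma deg_data : exists n (e : 'I_n -> A),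
  [/\ (forall a, pr d a = a -> exists u : 'rV[K]_n, a = \sum_k u 0 k *: e k),
      (forall k, pr d (e k) = e k)
    & (forall u : 'rV[K]_n, pr d (\sum_k u 0 k *: e k) = \sum_k u 0 k *: e k)].
Proof.
have [s Hs] := fdim d.
exists (size s), (fun k => pr d s`_k); split.
- move=> a Ha; have [c Hc] := Hs a Ha; exists (\row_k c k).
  rewrite -Ha {1}Hc pr_sum; apply: eq_bigr => k _; by rewrite prZ mxE.
- by move=> k; rewrite pr_hom.
- by move=> u; rewrite pr_sum; apply: eq_bigr => k _; rewrite prZ pr_hom.
Qed.

Lemma Rdeg_g v : pr d v = v -> (forall b, pr d b = b -> beta b v = 0) -> v = 0.
Proof.
have [n [e [H1 H2 H3]]] := deg_data.
exact: (@Rdeg K A (fun a => pr d a = a) beta bl br n e H1 H2 H3 (nd (i := d))).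
Qed.

Lemma E1deg_g a : pr d a = a -> exists v, pr d v = v /\ forall b, pr d b = b -> beta a b = beta b v.
Proof.
have [n [e [H1 H2 H3]]] := deg_data.
exact: (@E1deg K A (fun a => pr d a = a) beta bl br n e H1 H3 (nd (i := d))).
Qed.
End Deg.

Lemma GR a : (forall b, beta b a = 0) -> a = 0.
Proof.
move=> H; apply: ext => d; apply: (Rdeg_g (pr_hom d a)) => b Hb.
by rewrite -(Rpr a Hb).
Qed.

Lemma GE1 a : exists v, forall b, beta a b = beta b v.
Proof.
have [N HN] := exists_low a.
elim: N a HN => [|N IH] a HN.
  have -> : a = 0 by apply: ext => d; apply: HN.
  by exists 0 => b; rewrite gbl0 gbr0.
have Ha' : lowp N (a - pr N a).
  move=> d Hd; rewrite prB prpr; case: eqP => [->|ne]; first by rewrite subrr.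
  by rewrite HN ?subr0 // ltn_neqAle Hd andbT eq_sym; apply/eqP.
have [v' Hv'] := IH _ Ha'.
have [v0 [Hv0 E0]] := E1deg_g (pr_hom N a).
exists (v' + v0) => b.
rewrite -{1}(subrK (pr N a) a) blD Hv' brD; congr (_ + _).
by rewrite (Rpr b (pr_hom N a)) E0 ?pr_hom // -(Lpr b Hv0).
Qed.

Lemma low_transfer N a v : lowp N a -> (forall b, beta a b = beta b v) -> lowp N v.
Proof.
move=> HN H d Hd; apply: (Rdeg_g (pr_hom d v)) => b Hb.
by rewrite -(Rpr v Hb) -H (Lpr a Hb) HN // gbl0.
Qed.
End Grad.

Section Main.
Variable R : realType.
Local Notation C := (R[i]).
Variables (A : comAlgType C) (pr : nat -> A -> A) (ct : A -> C) (pb : A -> A -> A)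
 (B : algType C) (F : nat -> B -> Prop) (sym : nat -> B -> A) (s : B -> B).
Hypothesis HA : graded_poisson_algebra pr ct pb.
Hypothesis HB : filtered_quantization pr pb F sym s.

Lemma mprL d c x y : pr d (c *: x + y) = c *: pr d x + pr d y.
Proof. by case: HA => [[H _ _] _ _ _ _]; apply: H. Qed.
Lemma mprpr d e a : pr d (pr e a) = if d == e then pr e a else 0.
Proof. by case: HA => [[_ H _] _ _ _ _]; apply: H. Qed.
Lemma mdecomp a : exists N, a = \sum_(d < N) pr d a.
Proof. by case: HA => [[_ _ H] _ _ _ _]; apply: H. Qed.
Lemma mfdim d : exists s : seq A, forall a, pr d a = a ->
   exists c : 'I_(size s) -> C, a = \sum_(k < size s) c k *: s`_k.
Proof. by case: HA => [_ _ _ H _]; apply: H. Qed.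
Lemma one_ne0 : (1 : A) != 0.
Proof. by case: HA => [_ _ [H _] _ _]. Qed.
Lemma pr0ct a : pr 0 a = ct a *: 1.
Proof. by case: HA => [_ _ [_ H] _ _]. Qed.

Lemma scal1_inj a b : a *: (1 : A) = b *: 1 -> a = b.
Proof.
move=> H; apply/eqP; rewrite -subr_eq0.
have : (a - b) *: (1 : A) == 0 by rewrite scalerBl H subrr.
by rewrite scaler_eq0 (negbTE one_ne0) orbF.
Qed.

Lemma ct_lin c x y : ct (c *: x + y) = c * ct x + ct y.
Proof. by apply: scal1_inj; rewrite -pr0ct mprL !pr0ct scalerDl scalerA. Qed.
Lemma ct0 : ct 0 = 0.
Proof. have := ct_lin 1 0 0; rewrite scaler0 addr0 mul1r => H.
by apply: (addrI (ct 0)); rewrite addr0 -H. Qed.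
Lemma ctD x y : ct (x + y) = ct x + ct y.
Proof. by rewrite -[x]scale1r ct_lin mul1r scale1r. Qed.
Lemma ctZ c x : ct (c *: x) = c * ct x.
Proof. by rewrite -[c *: x]addr0 ct_lin ct0 addr0. Qed.
Lemma ct_sum (I : finType) (f : I -> A) : ct (\sum_i f i) = \sum_i ct (f i).
Proof. exact: (big_morph _ ctD ct0). Qed.
Lemma ct_hom d x : pr d x = x -> (0 < d)%N -> ct x = 0.
Proof.
move=> H d0; apply: scal1_inj; rewrite scale0r -pr0ct -H mprpr.
by case: eqP => // E; move: d0; rewrite -E.
Qed.

Lemma mF0 i : F i 0.
Proof. by case: HB => [[H _ _ _] _ _]; case: (H i). Qed.
Lemma mFc i c x y : F i x -> F i y -> F i (c *: x + y).
Proof. by case: HB => [[H _ _ _] _ _]; case: (H i) => _; apply. Qed.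
Lemma mFadd i x y : F i x -> F i y -> F i (x + y).
Proof. by move=> Hx Hy; rewrite -[x]scale1r; apply: mFc. Qed.
Lemma mFmono i x : F i x -> F i.+1 x.
Proof. by case: HB => [[_ H _ _] _ _]; apply: H. Qed.
Lemma mFle i j x : (i <= j)%N -> F i x -> F j x.
Proof.
elim: j => [|j IH]; first by rewrite leqn0 => /eqP ->.
rewrite leq_eqVlt => /orP [/eqP <- //| lt] Hx.
by apply: mFmono; apply: IH.
Qed.
Lemma mFsum i (I : finType) (f : I -> B) : (forall k, F i (f k)) -> F i (\sum_k f k).
Proof.
move=> H; apply: (big_ind (F i)); [exact: mF0 | exact: mFadd | by move=> k _].
Qed.
Lemma msymL i c x y : F i x -> F i y -> sym i (c *: x + y) = c *: sym i x + sym i y.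
Proof. by case: HB => [_ [_ H _ _ _] _]; apply: H. Qed.
Lemma msymhom i x : F i x -> pr i (sym i x) = sym i x.
Proof. by case: HB => [_ [H _ _ _ _] _]; apply: H. Qed.
Lemma msymker i x : F i x -> (sym i x = 0 <-> Fprev F i x).
Proof. by case: HB => [_ [_ _ H _ _] _]; apply: H. Qed.
Lemma ms_lin c x y : s (c *: x + y) = c *: s x + s y.
Proof. by case: HB => [_ _ [[H _ _] _ _ _]]; apply: H. Qed.
Lemma ms_one : s 1 = 1.
Proof. by case: HB => [_ _ [[_ H _] _ _ _]]. Qed.
Lemma ms_mul x y : s (x * y) = s x * s y.
Proof. by case: HB => [_ _ [[_ _ H] _ _ _]]; apply: H. Qed.
Lemma ms_inv x : s (s x) = x.
Proof. by case: HB => [_ _ [_ H _ _]]; apply: H. Qed.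
Lemma ms0 : s 0 = 0.
Proof. have := ms_lin 1 0 0; rewrite scaler0 addr0 scale1r => H.
by apply: (addrI (s 0)); rewrite addr0 -H. Qed.
Lemma msD x y : s (x + y) = s x + s y.
Proof. by rewrite -[x]scale1r ms_lin !scale1r. Qed.
Lemma ms_sum (I : finType) (f : I -> B) : s (\sum_i f i) = \sum_i s (f i).
Proof. exact: (big_morph _ msD ms0). Qed.

Section QM.
Variables (Phi : A -> B) (Psi : B -> A).
Hypothesis HS : in_S pr ct pb F sym s Phi Psi.

Lemma PhiL c a b : Phi (c *: a + b) = c *: Phi a + Phi b.
Proof. by case: HS => [[H _ _ _ _] _ _]; apply: H. Qed.
Lemma PhiK : cancel Phi Psi.
Proof. by case: HS => [[_ H _ _ _] _ _]. Qed.
Lemma PsiK : cancel Psi Phi.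
Proof. by case: HS => [[_ _ H _ _] _ _]. Qed.
Lemma PhiF i a : pr i a = a -> F i (Phi a) /\ sym i (Phi a) = a.
Proof. by case: HS => [[_ _ _ H _] _ _]; apply: H. Qed.
Lemma Phis i a : pr i a = a -> Phi ((-1) ^+ i *: a) = s (Phi a).
Proof. by case: HS => [[_ _ _ _ H] _ _]; apply: H. Qed.
Lemma PsiL c x y : Psi (c *: x + y) = c *: Psi x + Psi y.
Proof. by rewrite -{1}(PsiK x) -{1}(PsiK y) -PhiL PhiK. Qed.
Lemma Phi0 : Phi 0 = 0.
Proof. have := PhiL 1 0 0; rewrite scaler0 addr0 scale1r => H.
by apply: (addrI (Phi 0)); rewrite addr0 -H. Qed.
Lemma Psi0 : Psi 0 = 0.
Proof. by rewrite -Phi0 PhiK. Qed.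
Lemma PhiD x y : Phi (x + y) = Phi x + Phi y.
Proof. by rewrite -[x]scale1r PhiL !scale1r. Qed.
Lemma PsiD x y : Psi (x + y) = Psi x + Psi y.
Proof. by rewrite -[x]scale1r PsiL !scale1r. Qed.
Lemma Phi_sum (I : finType) (f : I -> A) : Phi (\sum_i f i) = \sum_i Phi (f i).
Proof. exact: (big_morph _ PhiD Phi0). Qed.

Lemma lowF n x : F n x -> lowp pr n.+1 (Psi x).
Proof.
elim: n x => [|n IH] x Fx.
- set a := sym 0 x; have ha : pr 0 a = a by apply: msymhom.
  have [Fa sa] := PhiF ha.
  set w := (-1) *: Phi a + x.
  have Fw : F 0 w by apply: mFc.
  have : sym 0 w = 0 by rewrite msymL // sa scaleN1r addNr.
  move/(msymker Fw) => /= w0.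
  have ex : x = Phi a + w by rewrite /w scaleN1r addNKr.
  rewrite ex PsiD PhiK w0 Psi0 addr0; exact: (hom_low mprpr ha).
- set a := sym n.+1 x; have ha : pr n.+1 a = a by apply: msymhom.
  have [Fa sa] := PhiF ha.
  set w := (-1) *: Phi a + x.
  have Fw : F n.+1 w by apply: mFc.
  have : sym n.+1 w = 0 by rewrite msymL // sa scaleN1r addNr.
  move/(msymker Fw) => /= Fw'.
  have ex : x = Phi a + w by rewrite /w scaleN1r addNKr.
  rewrite ex PsiD PhiK => d Hd.
  rewrite (prD mprL) (hom_low mprpr ha) // (IH _ Fw') ?addr0 //.
  exact: ltnW.
Qed.

Lemma Flow n v : lowp pr n.+1 v -> F n (Phi v).
Proof.
move=> Hv; rewrite (sum_pr_eq mprL mprpr mdecomp Hv) Phi_sum; apply: mFsum => k.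
apply: (mFle (i := k)); first by rewrite -ltnS.
by case: (PhiF (pr_hom mprpr k v)).
Qed.

Definition beta a b := ct (Psi (Phi a * Phi b)).

Lemma mbl c x y z : beta (c *: x + y) z = c * beta x z + beta y z.
Proof. by rewrite /beta PhiL mulrDl -scalerAl PsiL ct_lin. Qed.
Lemma mbr c x y z : beta z (c *: x + y) = c * beta z x + beta z y.
Proof. by rewrite /beta PhiL mulrDr -scalerAr PsiL ct_lin. Qed.

Lemma mbd i j a b : pr i a = a -> pr j b = b -> i != j -> beta a b = 0.
Proof.
move=> ha hb ne; case: HS => _ [Ck [sc corr sh]] _.
rewrite /beta -(corr i j a b ha hb) PhiK ct_sum big1 // => k _.
case: sc => _ _ deg _ _; have := deg k i j a b ha hb.
case: ifP => le H; last by rewrite H ct0.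
case: (posnP (i + j - 2 * k)) => [z|pos]; last exact: ct_hom H pos.
have lt : (minn i j < k)%N by move: ne => /eqP ne; lia.
by rewrite (sh k i j a b ha hb lt) ct0.
Qed.

Lemma mnd i a : pr i a = a -> (forall b, pr i b = b -> beta a b = 0) -> a = 0.
Proof.
move=> ha H; case: (eqVneq a 0) => // nz.
case: HS => _ _ nd; have [b [hb]] := nd i a ha nz.
by rewrite /starp -/(beta a b) H // eqxx.
Qed.

Definition betaT a b := beta b a.
Lemma tbl c x y z : betaT (c *: x + y) z = c * betaT x z + betaT y z.
Proof. exact: mbr. Qed.
Lemma tbr c x y z : betaT z (c *: x + y) = c * betaT z x + betaT z y.
Proof. exact: mbl. Qed.
Lemma tbd i j a b : pr i a = a -> pr j b = b -> i != j -> betaT a b = 0.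
Proof. by move=> ha hb ne; apply: (mbd hb ha); rewrite eq_sym. Qed.
Lemma tnd i a : pr i a = a -> (forall b, pr i b = b -> betaT a b = 0) -> a = 0.
Proof. exact: (Rdeg_g mprL mprpr mbl mbr mnd mfdim). Qed.

Lemma GRm a : (forall b, beta b a = 0) -> a = 0.
Proof. exact: (GR mprL mprpr mdecomp mbl mbr mbd mnd mfdim). Qed.
Lemma GLm a : (forall b, beta a b = 0) -> a = 0.
Proof. exact: (GL mprL mprpr mdecomp mbl mbd mnd). Qed.
Lemma GE1m a : exists v, forall b, beta a b = beta b v.
Proof. exact: (GE1 mprL mprpr mdecomp mbl mbr mbd mnd mfdim). Qed.
Lemma GE2m a : exists v, forall b, beta b a = beta v b.
Proof. exact: (GE1 mprL mprpr mdecomp tbl tbr tbd tnd mfdim). Qed.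
Lemma transm N a v : lowp pr N a -> (forall b, beta a b = beta b v) -> lowp pr N v.
Proof. exact: (low_transfer mprL mprpr mdecomp mbl mbr mbd mnd mfdim). Qed.

Definition T x := ct (Psi x).
Lemma TM x y : T (x * y) = beta (Psi x) (Psi y).
Proof. by rewrite /T /beta !PsiK. Qed.
Lemma T_lin c x y : T (c *: x + y) = c * T x + T y.
Proof. by rewrite /T PsiL ct_lin. Qed.
Lemma T0 : T 0 = 0.
Proof. by rewrite /T Psi0 ct0. Qed.
Lemma TD x y : T (x + y) = T x + T y.
Proof. by rewrite -[x]scale1r T_lin mul1r scale1r. Qed.
Lemma TZ c x : T (c *: x) = c * T x.
Proof. by rewrite -[c *: x]addr0 T_lin T0 addr0. Qed.
Lemma TB x y : T (x - y) = T x - T y.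
Proof. by rewrite -scaleN1r TD TZ mulN1r. Qed.

Lemma Bright z1 z2 : (forall w, T (w * z1) = T (w * z2)) -> z1 = z2.
Proof.
move=> H; apply: (can_inj PsiK); apply/eqP; rewrite -subr_eq0; apply/eqP.
apply: GRm => b.
rewrite -scaleN1r addrC mbr.
have := H (Phi b); rewrite !TM PhiK => ->.
by rewrite mulN1r addNr.
Qed.
Lemma Bleft z1 z2 : (forall w, T (z1 * w) = T (z2 * w)) -> z1 = z2.
Proof.
move=> H; apply: (can_inj PsiK); apply/eqP; rewrite -subr_eq0; apply/eqP.
apply: GLm => b.
rewrite -scaleN1r addrC mbl.
have := H (Phi b); rewrite !TM PhiK => ->.
by rewrite mulN1r addNr.
Qed.
Lemma BE1 x : exists z, forall y, T (x * y) = T (y * z).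
Proof.
have [v Hv] := GE1m (Psi x); exists (Phi v) => y.
by rewrite !TM PhiK Hv.
Qed.
Lemma BE2 x : exists z, forall y, T (y * x) = T (z * y).
Proof.
have [v Hv] := GE2m (Psi x); exists (Phi v) => y.
by rewrite !TM PhiK Hv.
Qed.
Lemma BF n x z : F n x -> (forall y, T (x * y) = T (y * z)) -> F n z.
Proof.
move=> Fx H; rewrite -(PsiK z); apply: Flow.
apply: (transm (lowF Fx)) => b.
by have := H (Phi b); rewrite !TM PhiK.
Qed.

Lemma Ts x : T (s x) = T x.
Proof.
rewrite /T -{1 2}(PsiK x); set a := Psi x.
have [N HN] := exists_low mprL mprpr mdecomp a.
rewrite {1 2}(sum_pr_eq mprL mprpr mdecomp HN) Phi_sum ms_sum.
have -> : \sum_(i < N) s (Phi (pr i a)) = Phi (\sum_(i < N) (-1) ^+ i *: pr i a).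
  by rewrite Phi_sum; apply: eq_bigr => i _; rewrite (Phis (pr_hom mprpr _ _)).
rewrite -(Phi_sum (fun i : 'I_N => pr i a)) !PhiK !ct_sum; apply: eq_bigr => i _.
case: (posnP i) => [->|pos]; first by rewrite expr0 scale1r.
by rewrite ctZ !(ct_hom (pr_hom mprpr _ _) pos) mulr0.
Qed.

End QM.

Lemma part1 Phi Psi : in_S pr ct pb F sym s Phi Psi ->
  exists g, twisting ct F s Psi g /\
       forall g', twisting ct F s Psi g' -> forall x, g' x = g x.
Proof.
move=> HS.
pose g x := proj1_sig (constructive_indefinite_description _ (BE1 HS x)).
have Hg x y : T Psi (x * y) = T Psi (y * g x).
  exact: (proj2_sig (constructive_indefinite_description _ (BE1 HS x)) y).
pose h x := proj1_sig (constructive_indefinite_description _ (BE2 HS x)).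
have Hh x y : T Psi (y * x) = T Psi (h x * y).
  exact: (proj2_sig (constructive_indefinite_description _ (BE2 HS x)) y).
exists g; split; last first.
  move=> g' [_ Hg'] x; apply: (Bright HS) => w.
  have Hg'' : forall x y, T Psi (x * y) = T Psi (y * g' x) := Hg'.
  by rewrite -Hg'' -Hg.
split; last by move=> x y; exact: Hg.
split.
- split.
  + move=> c x y; apply: (Bright HS) => w.
    by rewrite -Hg mulrDr -scalerAr (TD HS) (TZ HS) -!Hg mulrDl -scalerAl (TD HS) (TZ HS).
  + by apply: (Bright HS) => w; rewrite -Hg mul1r mulr1.
  + move=> x y; apply: (Bright HS) => w.
    rewrite -Hg mulrA -Hg mulrA -Hg.
    by rewrite mulrA.
- exists h; split => x.
  + by apply: (Bleft HS) => w; rewrite -Hh -Hg.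
  + by apply: (Bright HS) => w; rewrite -Hg -Hh.
- by move=> i x Fx; apply: (BF HS Fx (Hg x)).
- move=> x; apply: (Bright HS) => w.
  have E1 : T Psi (w * s (g x)) = T Psi (x * s w).
    by rewrite -(Ts HS) ms_mul ms_inv -Hg.
  rewrite E1 -Hg.
  by rewrite -(Ts HS (s x * w)) ms_mul ms_inv.
Qed.

Lemma part2 g Phi Psi : in_S pr ct pb F sym s Phi Psi -> twisting ct F s Psi g ->
     HH0s_dual_rep g (trT ct Psi).
Proof.
move=> HS [_ Htw].
have Htw' : forall x y, T Psi (x * y) = T Psi (y * g x) := Htw.
split; first by move=> c x y; exact: (T_lin HS c x y).
move=> x [l ->].
change (T Psi (\sum_(t <- l) t.1.1 *: (t.1.2 * t.2 - t.2 * g t.1.2)) = 0).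
rewrite (big_morph (T Psi) (TD HS) (T0 HS)) big1 // => t _.
by rewrite (TZ HS) (TB HS) Htw' subrr mulr0.
Qed.

Lemma part3 g Phi1 Psi1 Phi2 Psi2 :
     in_S pr ct pb F sym s Phi1 Psi1 -> in_S pr ct pb F sym s Phi2 Psi2 ->
     twisting ct F s Psi1 g -> twisting ct F s Psi2 g ->
     (forall x, HH0s_pre s g x -> trT ct Psi1 x = trT ct Psi2 x) ->
     forall a, Phi1 a = Phi2 a.
Proof.
move=> S1 S2 _ _ H.
have TT x : T Psi1 x = T Psi2 x.
  have inv : HH0s_pre s g (x + s x).
    rewrite /HH0s_pre msD ms_inv [s x + x]addrC subrr; exists [::]; by rewrite big_nil.
  have := H _ inv; change (T Psi1 (x + s x) = T Psi2 (x + s x) -> T Psi1 x = T Psi2 x).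
  rewrite (TD S1) (TD S2) (Ts S1) (Ts S2) => E.
  have two : (2 : C) != 0 by rewrite pnatr_eq0.
  by apply: (mulIf two); rewrite !mulr_natr !mulr2n.
have Hhom i a : pr i a = a -> Phi1 a = Phi2 a.
  move=> ha.
  have [F1 s1] := PhiF S1 ha; have [F2 s2] := PhiF S2 ha.
  set z := (-1) *: Phi2 a + Phi1 a.
  have Fz : F i z by apply: mFc.
  have : sym i z = 0 by rewrite msymL // s1 s2 scaleN1r addNr.
  move/(msymker Fz) => Pz.
  suff z0 : z = 0.
    by move/eqP: z0; rewrite /z scaleN1r addrC subr_eq0 => /eqP.
  case: i ha F1 F2 s1 s2 Fz Pz => [|m] ha F1 F2 s1 s2 Fz Pz; first exact Pz.
  rewrite -(PsiK S1 z); have -> : Psi1 z = 0; last exact: (Phi0 S1).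
  apply: (ext mdecomp) => d.
  case: (ltnP m d) => [lt|le]; first exact: (lowF S1 Pz lt).
  apply: (mnd S1 (pr_hom mprpr d _)) => b hb.
  rewrite -(Lpr mprL mprpr mdecomp (mbl S1) (mbd S1) _ hb).
  have -> : beta Phi1 Psi1 (Psi1 z) b = T Psi1 (z * Phi1 b) by rewrite (TM S1) (PhiK S1).
  rewrite /z mulrDl -scalerAl (T_lin S1) TT.
  rewrite (TM S2) (PhiK S2) (TM S1) !(PhiK S1).
  rewrite (mbd S1 ha hb) ?addr0; last by apply/eqP; lia.
  rewrite (Rpr mprL mprpr mdecomp (mbr S2) (mbd S2) _ ha).
  have [Fb _] := PhiF S1 hb.
  by rewrite (lowF S2 Fb) ?(gbr0 (mbr S2)) ?mulr0.
move=> a; have [N HN] := exists_low mprL mprpr mdecomp a.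
rewrite (sum_pr_eq mprL mprpr mdecomp HN) (Phi_sum S1) (Phi_sum S2); apply: eq_bigr => i _.
by apply: (Hhom i); exact: pr_hom mprpr _ _.
Qed.
End Main.

Theorem corollary3p5 (R : realType) (A : comAlgType R[i]) (pr : nat -> A -> A)
  (ct : A -> R[i]) (pb : A -> A -> A) (B : algType R[i]) (F : nat -> B -> Prop)
  (sym : nat -> B -> A) (s : B -> B) :
  graded_poisson_algebra pr ct pb ->
  filtered_quantization pr pb F sym s ->
  (* pi : S -> Aut(B), sending a star-product to its twisting automorphism *)
  (forall Phi Psi, in_S pr ct pb F sym s Phi Psi ->
     exists g, twisting ct F s Psi g /\
       forall g', twisting ct F s Psi g' -> forall x, g' x = g x) /\
  (* the fiber pi^-1(g) embeds into (HH_0(B,Bg)^s)^* via (Phi,Psi) |-> T *)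
  (forall g Phi Psi, in_S pr ct pb F sym s Phi Psi -> twisting ct F s Psi g ->
     HH0s_dual_rep g (trT ct Psi)) /\
  (forall g Phi1 Psi1 Phi2 Psi2,
     in_S pr ct pb F sym s Phi1 Psi1 -> in_S pr ct pb F sym s Phi2 Psi2 ->
     twisting ct F s Psi1 g -> twisting ct F s Psi2 g ->
     (forall x, HH0s_pre s g x -> trT ct Psi1 x = trT ct Psi2 x) ->
     forall a, Phi1 a = Phi2 a).
Proof.
move=> HA HB; split; first exact: part1 HA HB.
split; first exact: (part2 HA).
exact: part3 HA HB.
Qed.
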